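(* Let $m\ge 4$ and let $K\ne\Delta_{[m]}$ be a simplicial complex on $[m]$. Then $\mathrm{Bier}(K)$ is chordal if and only if $K$ contains no edges or $K^\vee$ contains no edges.
   Context: A simplicial complex $K$ on $[m]=\{1,\dots,m\}$ is a nonempty family of subsets of $[m]$ closed under taking subsets; an edge is a face of cardinality $2$. $\Delta_{[m]}=2^{[m]}$. Let $[m']=\{1',\dots,m'\}$ be a disjoint copy of $[m]$, $I'=\{i':i\in I\}$. For $K\ne\Delta_{[m]}$ the Alexander dual $K^\vee$ is the complex on $[m']$ with $J'\in K^\vee$ iff $[m]\setminus J\notin K$. The Bier sphere $\mathrm{Bier}(K)$ is the complex on $[m]\sqcup[m']$ with faces $I\sqcup J'$, $I\in K$, $J'\in K^\vee$, $I\cap J=\varnothing$. A graph is chordal if it has no induced cycle of length greater than $3$; a simplicial complex is chordal if its 1-skeleton is a chordal graph. *)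

(* Defs.v *)
From mathcomp Require Import all_boot.
Set Implicit Arguments. Unset Strict Implicit. Unset Printing Implicit Defensive.

Definition simplicial_complex (T : finType) (K : {set {set T}}) : Prop :=
  K != set0 /\ (forall A B : {set T}, A \in K -> B \subset A -> B \in K).

Definition full_simplex (T : finType) : {set {set T}} := [set: {set T}].

(* Alexander dual: J' in K^v iff [m] \ J notin K.  The copy [m'] is
   represented by the same type 'I_m (used via inr in the Bier sphere). *)
Definition alexander_dual (T : finType) (K : {set {set T}}) : {set {set T}} :=
  [set J | ~: J \notin K].

(* Bier sphere on [m] ⊔ [m'] = T + T: faces I ⊔ J' with I in K, J' in K^v,
   I ∩ J = ∅.  A subset S of T + T is I ⊔ J' with I = S ∩ [m], J = S ∩ [m']. *)
Definition bier (T : finType) (K : {set {set T}}) : {set {set (T + T)}} :=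
  [set S : {set (T + T)} |
     [&& [set i | inl i \in S] \in K,
         [set j | inr j \in S] \in alexander_dual K &
         [disjoint [set i | inl i \in S] & [set j | inr j \in S]]]].

Definition has_edge (T : finType) (K : {set {set T}}) : Prop :=
  exists2 A : {set T}, A \in K & #|A| = 2.

Definition skel_adj (T : finType) (K : {set {set T}}) (u v : T) : bool :=
  (u != v) && ([set u; v] \in K).

Definition induced_long_cycle (T : finType) (e : rel T) (k : nat) (f : 'I_k -> T) : Prop :=
  3 < k /\ injective f /\
  (forall i j : 'I_k, e (f i) (f j) = ((val j == (val i).+1 %% k) || (val i == (val j).+1 %% k))).

Definition chordal_graph (T : finType) (e : rel T) : Prop :=
  forall (k : nat) (f : 'I_k -> T), ~ induced_long_cycle e f.

Definition chordal_complex (T : finType) (K : {set {set T}}) : Prop :=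
  chordal_graph (skel_adj K).

(* Main.v *)
Require Import Defs.
From mathcomp Require Import all_boot zify.
From Stdlib Require Import Classical.
Set Implicit Arguments. Unset Strict Implicit. Unset Printing Implicit Defensive.

Lemma split_chordal (V : finType) (e : rel V) (P : pred V) :
 (forall u v, P u -> P v -> u != v -> e u v) ->
 (forall u v, ~~ P u -> ~~ P v -> ~~ e u v) ->
 chordal_graph e.
Proof.
move=> HP HN k f [k3 [finj Hf]].
case: k f finj Hf k3 => // k f finj Hf k3.
pose g n := f (@inord k n).
have Hg : forall a b, a < k.+1 -> b < k.+1 ->
   e (g a) (g b) = (b == a.+1 %% k.+1) || (a == b.+1 %% k.+1).
  by move=> a b Ha Hb; rewrite /g Hf /= !inordK.
have Hd : forall a b, a < k.+1 -> b < k.+1 -> a != b -> g a != g b.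
  move=> a b Ha Hb nab; apply/negP => /eqP /finj /(congr1 val).
  by rewrite /= !inordK // => /eqP; rewrite (negbTE nab).
have cP : forall a b, a < k.+1 -> b < k.+1 -> a != b -> e (g a) (g b) = false ->
    ~~ (P (g a) && P (g b)).
  move=> a b Ha Hb nab eab; apply/negP => /andP [Pa Pb].
  by move: (HP _ _ Pa Pb (Hd _ _ Ha Hb nab)); rewrite eab.
have cN : forall a b, e (g a) (g b) -> P (g a) || P (g b).
  move=> a b eab; apply/negPn/negP; rewrite negb_or => /andP [Na Nb].
  by move: (HN _ _ Na Nb); rewrite eab.
case: (ltngtP k 3) => [|hk|hk]; first by lia.
-
  have e01 : e (g 0) (g 1).
    by rewrite Hg; [|lia|lia]; rewrite !modn_small //; lia.
  have e12 : e (g 1) (g 2).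
    by rewrite Hg; [|lia|lia]; rewrite !modn_small //; lia.
  have e23 : e (g 2) (g 3).
    by rewrite Hg; [|lia|lia]; rewrite !modn_small //; lia.
  have e34 : e (g 3) (g 4).
    by rewrite Hg; [|lia|lia]; rewrite (modn_small (_ : 4 < k.+1)); last lia.
  have e02 : e (g 0) (g 2) = false.
    by rewrite Hg; [|lia|lia]; rewrite !modn_small //; lia.
  have e13 : e (g 1) (g 3) = false.
    by rewrite Hg; [|lia|lia]; rewrite !modn_small //; lia.
  have e24 : e (g 2) (g 4) = false.
    rewrite Hg; [|lia|lia]; rewrite (modn_small (_ : 3 < k.+1)); last by lia.
    have -> : (2 == 5 %% k.+1) = false.
      case: (ltngtP k 4) => [|h5|h5]; first by lia.
      - by rewrite modn_small //; lia.
      - by rewrite -h5 modnn.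
    by [].
  have c02 := cP 0 2 ltac:(lia) ltac:(lia) isT e02.
  have c13 := cP 1 3 ltac:(lia) ltac:(lia) isT e13.
  have c24 := cP 2 4 ltac:(lia) ltac:(lia) isT e24.
  have n01 := cN _ _ e01.
  have n12 := cN _ _ e12.
  have n23 := cN _ _ e23.
  have n34 := cN _ _ e34.
  move: c02 c13 n01 n12 n23 n34 c24.
  by case: (P (g 0)); case: (P (g 1)); case: (P (g 2)); case: (P (g 3)); case: (P (g 4)).
- subst k.
  have c02 := cP 0 2 isT isT isT (Hg 0 2 isT isT).
  have c13 := cP 1 3 isT isT isT (Hg 1 3 isT isT).
  have n01 := cN 0 1 (etrans (Hg 0 1 isT isT) isT).
  have n12 := cN 1 2 (etrans (Hg 1 2 isT isT) isT).
  have n23 := cN 2 3 (etrans (Hg 2 3 isT isT) isT).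
  have n30 := cN 3 0 (etrans (Hg 3 0 isT isT) isT).
  move: c02 c13 n01 n12 n23 n30.
  by case: (P (g 0)); case: (P (g 1)); case: (P (g 2)); case: (P (g 3)).
Qed.

Lemma cycle4 (V : finType) (e : rel V) v0 v1 v2 v3 :
  (forall u v, e u v = e v u) -> (forall u, e u u = false) ->
  uniq [:: v0; v1; v2; v3] ->
  e v0 v1 -> e v1 v2 -> e v2 v3 -> e v3 v0 -> e v0 v2 = false -> e v1 v3 = false ->
  ~ chordal_graph e.
Proof.
move=> es ei U e01 e12 e23 e30 e02 e13 Hc.
apply: (Hc 4 (fun i : 'I_4 => nth v0 [:: v0; v1; v2; v3] i)).
move: U; rewrite /= !inE !negb_or => /and4P [/and3P [n01 n02 n03] /andP [n12 n13] n23 _].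
split; first by [].
have e10 : e v1 v0 by rewrite es.
have e21 : e v2 v1 by rewrite es.
have e32 : e v3 v2 by rewrite es.
have e03 : e v0 v3 by rewrite es.
have e20 : e v2 v0 = false by rewrite es.
have e31 : e v3 v1 = false by rewrite es.
split.
- move=> [[|[|[|[|i]]]] Hi] [[|[|[|[|j]]]] Hj] //= H; try (apply: val_inj => //=);
  move: H n01 n02 n03 n12 n13 n23; try by move=> ->; rewrite eqxx.
  all: try by move=> <-; rewrite eqxx.
- move=> [[|[|[|[|i]]]] Hi] [[|[|[|[|j]]]] Hj] //=; by rewrite ?ei.
Qed.

Lemma sc0 (T : finType) (K : {set {set T}}) : simplicial_complex K -> set0 \in K.
Proof. by case=> /set0Pn [A HA] Hd; apply: (Hd A) => //; apply: sub0set. Qed.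

Lemma dual_down (T : finType) (K : {set {set T}}) : simplicial_complex K ->
  forall A B : {set T}, A \in alexander_dual K -> B \subset A -> B \in alexander_dual K.
Proof.
move=> [_ Hd] A B; rewrite !inE => HA HBA; apply/negP => HB.
by move/negP: HA; apply; apply: (Hd _ _ HB); rewrite setCS.
Qed.

Lemma setT_notin (T : finType) (K : {set {set T}}) : simplicial_complex K ->
  K != full_simplex T -> setT \notin K.
Proof.
move=> [_ Hd] HK; apply/negP => HT; move/negP: HK; apply; apply/eqP/setP => A.
by rewrite /full_simplex inE (Hd setT) // subsetT.
Qed.

Lemma dual0 (T : finType) (K : {set {set T}}) : simplicial_complex K ->
  K != full_simplex T -> set0 \in alexander_dual K.
Proof. by move=> s h; rewrite inE setC0 setT_notin. Qed.

Lemma skel_sym (T : finType) (K : {set {set T}}) u v : skel_adj K u v = skel_adj K v u.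
Proof. by rewrite /skel_adj eq_sym setUC. Qed.

Lemma skel_irr (T : finType) (K : {set {set T}}) u : skel_adj K u u = false.
Proof. by rewrite /skel_adj eqxx. Qed.


Lemma adj_ll (T : finType) (K : {set {set T}}) x y :
  set0 \in alexander_dual K ->
  skel_adj (bier K) (inl x) (inl y) = (x != y) && ([set x; y] \in K).
Proof.
move=> D0; rewrite /skel_adj /bier inE.
have -> : [set i | inl i \in ([set inl x; inl y] : {set T + T})] = [set x; y].
  by apply/setP => i; rewrite !inE.
have -> : [set i | inr i \in ([set inl x; inl y] : {set T + T})] = set0.
  by apply/setP => i; rewrite !inE.
have D : [disjoint [set x; y] & (set0 : {set T})] by rewrite -setI_eq0 setI0.
by rewrite D0 D !andbT.
Qed.

Lemma adj_rr (T : finType) (K : {set {set T}}) x y :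
  set0 \in K ->
  skel_adj (bier K) (inr x) (inr y) = (x != y) && ([set x; y] \in alexander_dual K).
Proof.
move=> K0; rewrite /skel_adj /bier inE.
have -> : [set i | inl i \in ([set inr x; inr y] : {set T + T})] = set0.
  by apply/setP => i; rewrite !inE.
have -> : [set i | inr i \in ([set inr x; inr y] : {set T + T})] = [set x; y].
  by apply/setP => i; rewrite !inE.
have D : [disjoint (set0 : {set T}) & [set x; y]] by rewrite -setI_eq0 set0I.
by rewrite K0 D !andbT.
Qed.

Lemma adj_lr (T : finType) (K : {set {set T}}) x y :
  skel_adj (bier K) (inl x) (inr y) = [&& [set x] \in K, [set y] \in alexander_dual K & x != y].
Proof.
rewrite /skel_adj /bier inE.
have -> : [set i | inl i \in ([set inl x; inr y] : {set T + T})] = [set x].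
  by apply/setP => i; rewrite !inE orbF.
have -> : [set i | inr i \in ([set inl x; inr y] : {set T + T})] = [set y].
  by apply/setP => i; rewrite !inE.
by rewrite disjoints1 in_set1 andTb.
Qed.

Lemma two_out (m : nat) (x y : 'I_m) : 4 <= m ->
  exists a b, [/\ a != b, a != x, a != y, b != x & b != y].
Proof.
move=> m4.
have h1 : #|[set x; y]| <= 2 by rewrite cards2; case: (x != y).
have h2 := cardsC [set x; y]; rewrite card_ord in h2.
have /card_gt1P [a [b [ha hb nab]]] : 1 < #|~: [set x; y]| by lia.
exists a, b; move: ha hb; rewrite !inE !negb_or => /andP [ax ay] /andP [bx bY].
by split.
Qed.

Lemma pair_sub (T : finType) (a b c d : T) : a != c -> a != d -> b != c -> b != d ->
  [set a; b] \subset ~: [set c; d].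
Proof.
move=> ac ad bc bd; apply/subsetP => z; rewrite !inE => /orP [] /eqP ->;
by rewrite negb_or ?ac ?ad ?bc ?bd.
Qed.

Lemma three_out (m : nat) (p p' q : 'I_m) : 4 <= m ->
  exists r, [/\ r != p, r != p' & r != q].
Proof.
move=> m4.
have h1 : #|[set p; p'; q]| <= 3.
  rewrite cardsU cards2 cards1; case: (p != p'); lia.
have h2 := cardsC [set p; p'; q]; rewrite card_ord in h2.
have /card_gt0P [r hr] : 0 < #|~: [set p; p'; q]| by lia.
by exists r; move: hr; rewrite !inE !negb_or => /andP [/andP [g1 g2] g3]; split.
Qed.

Lemma core (m : nat) (K : {set {set 'I_m}}) : 4 <= m -> simplicial_complex K ->
  K != full_simplex 'I_m -> chordal_complex (bier K) ->
  (forall x y, x != y -> [set x; y] \in K -> ~: [set x; y] \in K) ->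
  forall p p' q, p != p' -> [set p; p'] \in K -> q != p -> q != p' ->
  ~: [set p; q] \notin K -> False.
Proof.
move=> m4 sc nf Hc H p p' q npp' PK nqp nqp' nC.
have K0 := sc0 sc; have D0 := dual0 sc nf; have [_ Hd] := sc.
have [r [rp rp' rq]] := three_out p p' q m4.
have npq : p != q by rewrite eq_sym.
have pqK : [set p; q] \notin K.
  by apply/negP => h; move/negP: nC; apply; exact: H _ _ npq h.
have CPK := H _ _ npp' PK.
have qrK : [set q; r] \in K.
  by apply: (Hd _ _ CPK); apply: pair_sub; rewrite // eq_sym.
have nqr : q != r by rewrite eq_sym.
have npr : p != r by rewrite eq_sym.
have np'r : p' != r by rewrite eq_sym.
have np'q : p' != q by rewrite eq_sym.
have p'rK : [set p'; r] \notin K.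
  apply/negP => h; move/negP: pqK; apply; apply: (Hd _ _ (H _ _ np'r h)).
  by apply: pair_sub; rewrite // eq_sym.
case: (boolP ([set p; r] \in K)) => prK.
- have p'qK : [set p'; q] \in K.
    apply: (Hd _ _ (H _ _ npr prK)); apply: pair_sub; by rewrite // eq_sym.
  apply: (@cycle4 _ (skel_adj (bier K)) (inl p) (inl p') (inl q) (inl r)) => //.
  + exact: skel_sym.
  + exact: skel_irr.
  + by rewrite /= !inE /= negb_or !negb_or npp' npq npr np'q np'r nqr.
  + by rewrite adj_ll // npp'.
  + by rewrite adj_ll // np'q.
  + by rewrite adj_ll // nqr.
  + by rewrite adj_ll // rp setUC.
  + by rewrite adj_ll // (negbTE pqK) andbF.
  + by rewrite adj_ll // (negbTE p'rK) andbF.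
- have pqD : [set p; q] \in alexander_dual K by rewrite inE.
  have qp'D : [set q; p'] \in alexander_dual K.
    rewrite inE; apply/negP => h; move/negP: prK; apply; apply: (Hd _ _ h).
    by apply: pair_sub; rewrite // eq_sym.
  have p'rD : [set p'; r] \in alexander_dual K.
    rewrite inE; apply/negP => h; move/negP: pqK; apply; apply: (Hd _ _ h).
    by apply: pair_sub; rewrite // eq_sym.
  have p'qK : [set p'; q] \notin K.
    apply/negP => h; move/negP: prK; apply; apply: (Hd _ _ (H _ _ np'q h)).
    by apply: pair_sub; rewrite // eq_sym.
  have rpD : [set r; p] \in alexander_dual K.
    rewrite inE; apply/negP => h; move/negP: p'qK; apply; apply: (Hd _ _ h).
    by apply: pair_sub; rewrite // eq_sym.
  have ppD : [set p; p'] \notin alexander_dual K by rewrite inE CPK.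
  have qrD : [set q; r] \notin alexander_dual K by rewrite inE (H _ _ nqr qrK).
  apply: (@cycle4 _ (skel_adj (bier K)) (inr p) (inr q) (inr p') (inr r)) => //.
  + exact: skel_sym.
  + exact: skel_irr.
  + by rewrite /= !inE /= !negb_or; apply/and4P; split => //; [apply/and3P|apply/andP]; split.
  + by rewrite adj_rr // npq.
  + by rewrite adj_rr // nqp'.
  + by rewrite adj_rr // np'r.
  + by rewrite adj_rr // rp.
  + by rewrite adj_rr // (negbTE ppD) andbF.
  + by rewrite adj_rr // (negbTE qrD) andbF.
Qed.

Theorem mainTheorem14 (m : nat) (K : {set {set 'I_m}}) :
  4 <= m -> simplicial_complex K -> K != full_simplex 'I_m ->
  (chordal_complex (bier K) <-> (~ has_edge K \/ ~ has_edge (alexander_dual K))).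
Proof.
move=> m4 sc nf.
have K0 := sc0 sc; have D0 := dual0 sc nf; have [_ Hd] := sc.
split.
- move=> Hc; apply: NNPP => Hn.
  have HK : has_edge K by apply: NNPP => h; apply: Hn; left.
  have HD : has_edge (alexander_dual K) by apply: NNPP => h; apply: Hn; right.
  case: HK => A AK /eqP /cards2P [a [b [nab eA]]]; subst A.
  case: HD => B BD /eqP /cards2P [c [d [ncd eB]]]; subst B.
  case: (boolP [exists x, exists y,
     [&& x != y, [set x; y] \in K & [set x; y] \in alexander_dual K]]).
  + case/existsP => x /existsP [y /and3P [nxy xK xD]].
    have nyx : y != x by rewrite eq_sym.
    have yK : [set y] \in K by apply: (Hd _ _ xK); rewrite sub1set !inE eqxx orbT.
    have xK1 : [set x] \in K by apply: (Hd _ _ xK); rewrite sub1set !inE eqxx.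
    have yD : [set y] \in alexander_dual K.
      by apply: (dual_down sc xD); rewrite sub1set !inE eqxx orbT.
    have xD1 : [set x] \in alexander_dual K.
      by apply: (dual_down sc xD); rewrite sub1set !inE eqxx.
    apply: (@cycle4 _ (skel_adj (bier K)) (inl x) (inl y) (inr x) (inr y)) => //.
    * exact: skel_sym.
    * exact: skel_irr.
    * by rewrite /= !inE /= ?negb_or; apply/and3P; split => //; apply/andP; split.
    * by rewrite adj_ll // nxy.
    * by rewrite adj_lr yK xD1 nyx.
    * by rewrite adj_rr // nxy.
    * by rewrite skel_sym adj_lr xK1 yD nxy.
    * by rewrite adj_lr eqxx !andbF.
    * by rewrite adj_lr eqxx !andbF.
  + move=> Hne.
    have H : forall x y, x != y -> [set x; y] \in K -> ~: [set x; y] \in K.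
      move=> x y nxy xK; apply/negPn/negP => nC; move/negP: Hne; apply.
      apply/existsP; exists x; apply/existsP; exists y.
      by rewrite nxy xK inE nC.
    have QnK : [set c; d] \notin K.
      by apply/negP => h; move: BD; rewrite inE (H _ _ ncd h).
    have o1 : (c \in [set a; b]) || (d \in [set a; b]).
      apply/negPn/negP; rewrite negb_or => /andP [nc nd].
      move/negP: QnK; apply; apply: (Hd _ _ (H _ _ nab AK)).
      by apply/subsetP => z; rewrite !inE => /orP [] /eqP ->; rewrite -in_set2.
    have o2 : ~~ ((c \in [set a; b]) && (d \in [set a; b])).
      apply/negP => /andP [hc hd]; move/negP: QnK; apply; apply: (Hd _ _ AK).
      by apply/subsetP => z; rewrite !inE => /orP [] /eqP ->; rewrite -in_set2.
    have nC : ~: [set c; d] \notin K by move: BD; rewrite inE.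
    have nba : b != a by rewrite eq_sym.
    rewrite !inE in o1 o2.
    case/orP: o1 => [/orP [/eqP ca|/eqP cb] | /orP [/eqP da| /eqP db]]; subst.
    * move: o2; rewrite eqxx /= negb_or => /andP [h1 h2].
      exact: (core m4 sc nf Hc H nab AK h1 h2 nC).
    * move: o2; rewrite eqxx orbT /= negb_or => /andP [h1 h2].
      by apply: (core m4 sc nf Hc H nba _ h2 h1 nC); rewrite setUC.
    * move: o2; rewrite eqxx /= andbT negb_or => /andP [h1 h2].
      by apply: (core m4 sc nf Hc H nab AK h1 h2); rewrite setUC.
    * move: o2; rewrite eqxx orbT /= andbT negb_or => /andP [h1 h2].
      by apply: (core m4 sc nf Hc H nba _ h2 h1); rewrite setUC.
- case=> [nK|nD].
  + apply: (split_chordal (P := fun v : 'I_m + 'I_m => if v is inr _ then true else false)).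
    * move=> [x|x] [y|y] //= _ _ nxy.
      rewrite adj_rr // nxy /= inE; apply/negP => h.
      have [a [b [nab ax ay bx bY]]] := two_out x y m4.
      apply: nK; exists [set a; b]; last by rewrite cards2 nab.
      by apply: (Hd _ _ h); apply: pair_sub.
    * move=> [x|x] [y|y] //= _ _.
      rewrite adj_ll //; apply/negP => /andP [nxy h]; apply: nK.
      by exists [set x; y] => //; rewrite cards2 nxy.
  + apply: (split_chordal (P := fun v : 'I_m + 'I_m => if v is inl _ then true else false)).
    * move=> [x|x] [y|y] //= _ _ nxy.
      rewrite adj_ll // nxy /=.
      have [a [b [nab ax ay bx bY]]] := two_out x y m4.
      have : [set a; b] \notin alexander_dual K.
        apply/negP => h; apply: nD; exists [set a; b] => //; by rewrite cards2 nab.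
      rewrite inE negbK => h; apply: (Hd _ _ h); apply: pair_sub; by rewrite // eq_sym.
    * move=> [x|x] [y|y] //= _ _.
      rewrite adj_rr //; apply/negP => /andP [nxy h]; apply: nD.
      by exists [set x; y] => //; rewrite cards2 nxy.
Qed.
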